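(* Let $a,b,c$ be real numbers with $0<a,b<+\infty$ and $a+b<c<a+b+1$. Define $$P(a,b,c):=\frac{\Gamma(c)\Gamma(c-a-b)}{\Gamma(c-a)\Gamma(c-b)},\qquad Q(a,b,c):=\frac{\Gamma(c)\Gamma(a+b+1-c)}{(c-a-b)\Gamma(a)\Gamma(b)},$$ and $q(a,b,c):=Q(a,b,c)$ if $P(a,b,c)\geq Q(a,b,c)$, $q(a,b,c):=P(a,b,c)-1$ if $P(a,b,c)<Q(a,b,c)$. Then for all $w\in(0,1)$, $$F(a,b,c;w)^2>P(a,b,c)^2-2P(a,b,c)Q(a,b,c)(1-w)^{c-a-b}+q(a,b,c)^2(1-w)^{2(c-a-b)}.$$
   Context: $F(\alpha,\beta,\gamma;w)$ denotes the Gauss hypergeometric function ${}_2F_1$ and $\Gamma$ the Gamma function. *)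

(* Defs.v *)
From Stdlib Require Import Reals.
From Coquelicot Require Import Coquelicot.
Open Scope R_scope.

Fixpoint pochhammer (x : R) (n : nat) : R :=
  match n with
  | O => 1
  | S m => pochhammer x m * (x + INR m)
  end.

(* Gauss hypergeometric function 2F1(a,b;c;w) as the sum of its power series
   (used here only for w in (0,1) and c > 0, where the series converges). *)
Definition hyp2F1 (a b c w : R) : R :=
  Series (fun n => pochhammer a n * pochhammer b n
                   / (pochhammer c n * INR (Factorial.fact n)) * w ^ n).

(* Euler's Gamma function, Gamma(x) = \int_0^{+oo} t^(x-1) e^(-t) dt,
   (used here only for x > 0, where the improper integral converges). *)
Definition Gamma (x : R) : R :=
  RInt_gen (fun t => Rpower t (x - 1) * exp (- t))
           (at_right 0) (Rbar_locally p_infty).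

Definition Pfun (a b c : R) : R :=
  Gamma c * Gamma (c - a - b) / (Gamma (c - a) * Gamma (c - b)).

Definition Qfun (a b c : R) : R :=
  Gamma c * Gamma (a + b + 1 - c) / ((c - a - b) * Gamma a * Gamma b).

Definition qfun (a b c : R) : R :=
  if Rle_dec (Qfun a b c) (Pfun a b c) then Qfun a b c else Pfun a b c - 1.

(* Main.v *)
Require Import Defs.
From Stdlib Require Import Reals Lra Lia Psatz ZArith.
From Coquelicot Require Import Coquelicot.
Open Scope R_scope.


Lemma exp_nat_mul : forall n u, exp (INR n * u) = exp u ^ n.
Proof.
  induction n; intro u.
  - simpl. rewrite Rmult_0_l. apply exp_0.
  - rewrite S_INR, Rmult_plus_distr_r, Rmult_1_l, exp_plus, IHn. simpl. ring.
Qed.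

Lemma pow1p_le_exp : forall (m : nat) t, (0 < m)%nat -> 0 <= t ->
  (1 + t) ^ m <= INR m ^ m * exp t.
Proof.
  intros m t Hm Ht.
  assert (Hm' : 0 < INR m) by (apply lt_0_INR; lia).
  assert (H1 : 1 <= INR m) by (apply (le_INR 1); lia).
  replace (exp t) with (exp (t / INR m) ^ m).
  2: { rewrite <- exp_nat_mul. f_equal. field. lra. }
  replace ((1 + t) ^ m) with (INR m ^ m * ((1 + t) / INR m) ^ m).
  2: { rewrite <- Rpow_mult_distr. f_equal. field. lra. }
  apply Rmult_le_compat_l. { apply pow_le. lra. }
  apply pow_incr. split.
  - apply Rdiv_le_0_compat; lra.
  - apply Rle_trans with (1 + t / INR m). 2: apply exp_ineq1_le.
    assert (/ INR m <= 1) by (rewrite <- Rinv_1; apply Rinv_le_contravar; lra).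
    unfold Rdiv. rewrite Rmult_plus_distr_r. lra.
Qed.

Lemma nat_above : forall y : R, exists N : nat, y <= INR N.
Proof.
  intro y. destruct (archimed y) as [H1 _].
  destruct (Z_le_gt_dec (up y) 0) as [Hz|Hz].
  - exists 0%nat. simpl. apply IZR_le in Hz. lra.
  - exists (Z.to_nat (up y)). rewrite INR_IZR_INZ, Z2Nat.id by lia. lra.
Qed.

Lemma Rpower_le_pow1p : forall t y N, 0 < t -> 0 <= y <= INR N ->
  Rpower t y <= (1 + t) ^ N.
Proof.
  intros t y N Ht Hy.
  apply Rle_trans with (Rpower (1 + t) y).
  - apply Rle_Rpower_l; lra.
  - rewrite <- Rpower_pow by lra. apply Rle_Rpower; lra.
Qed.

Lemma bound_K : forall y, 0 <= y -> exists K, 0 < K /\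
  forall t, 0 < t -> Rpower t y * exp (- t) <= K / (1 + t) ^ 2.
Proof.
  intros y Hy. destruct (nat_above y) as [N HN].
  exists (INR (N + 2) ^ (N + 2)). split.
  { apply pow_lt. apply lt_0_INR. lia. }
  intros t Ht.
  assert (H1 := Rpower_le_pow1p t y N Ht (conj Hy HN)).
  assert (H2 := pow1p_le_exp (N + 2) t ltac:(lia) ltac:(lra)).
  assert (Hp : 0 < (1 + t) ^ 2) by (apply pow_lt; lra).
  assert (He : 0 < exp (- t)) by apply exp_pos.
  rewrite pow_add in H2.
  apply Rle_trans with ((1 + t) ^ N * exp (- t)).
  { apply Rmult_le_compat_r; lra. }
  apply Rmult_le_reg_r with ((1 + t) ^ 2); [lra|].
  replace (INR (N + 2) ^ (N + 2) / (1 + t) ^ 2 * (1 + t) ^ 2) with (INR (N + 2) ^ (N + 2)) by (field; lra).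
  apply Rmult_le_reg_r with (exp t); [apply exp_pos|].
  replace ((1 + t) ^ N * exp (- t) * (1 + t) ^ 2 * exp t) with ((1 + t) ^ N * (1 + t) ^ 2 * (exp (- t) * exp t)) by ring.
  rewrite <- exp_plus. replace (- t + t) with 0 by ring. rewrite exp_0. lra.
Qed.

Lemma is_derive_Rpower : forall y t, 0 < t ->
  is_derive (fun u => Rpower u y) t (y * Rpower t (y - 1)).
Proof. intros y t Ht. apply is_derive_Reals. apply derivable_pt_lim_power. exact Ht. Qed.

Lemma continuous_Rpower : forall y t, 0 < t -> continuous (fun u => Rpower u y) t.
Proof. intros y t Ht. apply (ex_derive_continuous (K := R_AbsRing) (V := R_NormedModule)). eexists. apply is_derive_Rpower, Ht. Qed.

Lemma is_RInt_inv_sq : forall a b, 0 <= a -> 0 <= b ->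
  is_RInt (fun t => / (1 + t) ^ 2) a b (/ (1 + a) - / (1 + b)).
Proof.
  intros a b Ha Hb.
  replace (/ (1 + a) - / (1 + b)) with (minus ((fun t => - / (1 + t)) b) ((fun t => - / (1 + t)) a)).
  2: { unfold minus, plus, opp; simpl. ring. }
  apply (is_RInt_derive (fun t => - / (1 + t)) (fun t => / (1 + t) ^ 2)).
  - intros x Hx. assert (0 <= x). { destruct Hx. apply Rle_trans with (Rmin a b); auto. apply Rmin_glb; lra. }
    auto_derive. lra. field. lra.
  - intros x Hx. assert (0 <= x). { destruct Hx. apply Rle_trans with (Rmin a b); auto. apply Rmin_glb; lra. }
    apply (ex_derive_continuous (K := R_AbsRing) (V := R_NormedModule)). auto_derive. assert (0 < (1+x)^2) by (apply pow_lt; lra). lra.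
Qed.

Lemma is_derive_ext_R (f g : R -> R) x l :
  (forall t, f t = g t) -> is_derive f x l -> is_derive g x l.
Proof. apply is_derive_ext. Qed.

Lemma is_derive_val (f : R -> R) x l l' : is_derive f x l -> l = l' -> is_derive f x l'.
Proof. intros H ->; exact H. Qed.

Definition fG (x t : R) := Rpower t (x - 1) * exp (- t).

Lemma ex_derive_Rpower_mul : forall y t (g : R -> R), 0 < t -> ex_derive g t ->
  ex_derive (fun u => Rpower u y * g u) t.
Proof.
  intros y t g Ht Hg. apply (ex_derive_mult (fun u => Rpower u y) g); auto.
  eexists. apply is_derive_Rpower, Ht.
Qed.

Lemma continuous_Rpower_mul : forall y t (g : R -> R), 0 < t -> ex_derive g t ->
  continuous (fun u => Rpower u y * g u) t.
Proof.
  intros. apply (ex_derive_continuous (K := R_AbsRing) (V := R_NormedModule)).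
  apply ex_derive_Rpower_mul; auto.
Qed.

Lemma Rmin_pos : forall a b, 0 < a -> 0 < b -> 0 < Rmin a b.
Proof. intros. apply Rmin_glb_lt; auto. Qed.

Lemma ex_RInt_Rpower_mul : forall y a b (g : R -> R), 0 < a -> 0 < b ->
  (forall t, 0 < t -> ex_derive g t) ->
  ex_RInt (fun u => Rpower u y * g u) a b.
Proof.
  intros y a b g Ha Hb Hg. apply (ex_RInt_continuous (V := R_CompleteNormedModule)). intros z Hz.
  assert (0 < z) by (apply Rlt_le_trans with (Rmin a b); [apply Rmin_pos|]; tauto).
  apply continuous_Rpower_mul; auto.
Qed.

Lemma ex_RInt_fG : forall x a b, 0 < a -> 0 < b -> ex_RInt (fG x) a b.
Proof.
  intros. unfold fG. apply ex_RInt_Rpower_mul; auto. intros. auto_derive. auto.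
Qed.

Lemma absRInt_le : forall f g a b,
  (forall t, Rmin a b < t < Rmax a b -> 0 <= f t <= g t) ->
  ex_RInt f a b -> ex_RInt g a b -> Rabs (RInt f a b) <= Rabs (RInt g a b).
Proof.
  intros f g a b H Hf Hg.
  destruct (Rle_dec a b) as [Hab|Hab].
  - rewrite Rmin_left, Rmax_right in H by lra.
    assert (0 <= RInt f a b) by (apply RInt_ge_0; auto; intros; apply H; auto).
    assert (RInt f a b <= RInt g a b) by (apply RInt_le; auto; intros; apply H; auto).
    rewrite !Rabs_pos_eq; lra.
  - rewrite Rmin_right, Rmax_left in H by lra.
    apply ex_RInt_swap in Hf. apply ex_RInt_swap in Hg.
    rewrite <- (opp_RInt_swap f b a Hf), <- (opp_RInt_swap g b a Hg).
    unfold opp; simpl. rewrite !Rabs_Ropp.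
    assert (0 <= RInt f b a) by (apply RInt_ge_0; auto; [lra|]; intros; apply H; auto).
    assert (RInt f b a <= RInt g b a) by (apply RInt_le; auto; [lra|]; intros; apply H; auto).
    rewrite !Rabs_pos_eq; lra.
Qed.

Lemma is_RInt_Rpow : forall x a b, 0 < a -> 0 < b -> x <> 0 ->
  is_RInt (fun t => Rpower t (x - 1)) a b ((Rpower b x - Rpower a x) / x).
Proof.
  intros x a b Ha Hb Hx.
  replace ((Rpower b x - Rpower a x) / x) with
    (minus ((fun t => Rpower t x / x) b) ((fun t => Rpower t x / x) a)).
  2: { unfold minus, plus, opp; simpl. field. auto. }
  apply (is_RInt_derive (fun t => Rpower t x / x) (fun t => Rpower t (x - 1))).
  - intros z Hz.
    assert (0 < z) by (apply Rlt_le_trans with (Rmin a b); [apply Rmin_pos|]; tauto).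
    replace (Rpower z (x - 1)) with (/ x * (x * Rpower z (x - 1))) by (field; auto).
    apply (is_derive_ext_R (fun t => / x * Rpower t x)). { intros; unfold Rdiv; ring. }
    apply is_derive_scal. apply is_derive_Rpower. auto.
  - intros z Hz.
    assert (0 < z) by (apply Rlt_le_trans with (Rmin a b); [apply Rmin_pos|]; tauto).
    apply continuous_Rpower; auto.
Qed.

Lemma Chasles_R (f : R -> R) a b c : ex_RInt f a b -> ex_RInt f b c ->
  RInt f a b + RInt f b c = RInt f a c.
Proof. apply (RInt_Chasles (V := R_CompleteNormedModule)). Qed.

Lemma abs_diff_lt : forall p q B, 0 < p < B -> 0 < q < B -> Rabs (p - q) < B.
Proof. intros. unfold Rabs; destruct (Rcase_abs _); lra. Qed.

Lemma Rpower_pos : forall t y, 0 < Rpower t y.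
Proof. intros. unfold Rpower. apply exp_pos. Qed.

Lemma exp_neg_le1 : forall t, 0 <= t -> exp (- t) <= 1.
Proof. intros. rewrite <- exp_0. destruct (Req_dec t 0). subst. rewrite Ropp_0. lra.
  left. apply exp_increasing. lra. Qed.

Lemma fG_bounds0 : forall x t, 0 < t -> 0 <= fG x t <= Rpower t (x - 1).
Proof.
  intros x t Ht. unfold fG. assert (H1 := Rpower_pos t (x - 1)).
  assert (H2 := exp_pos (- t)). assert (H3 := exp_neg_le1 t ltac:(lra)). nra.
Qed.

Lemma fG_tail : forall x, 0 < x -> exists K, 0 < K /\
  (forall t, 0 < t -> Rpower t (x + 1) * exp (- t) <= K / (1 + t) ^ 2) /\
  (forall t, 1 <= t -> 0 <= fG x t <= K / (1 + t) ^ 2).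
Proof.
  intros x Hx. destruct (bound_K (x + 1)) as [K [HK HB]]; [lra|].
  exists K. split; auto. split; auto.
  intros t Ht. split. { apply fG_bounds0. lra. }
  eapply Rle_trans; [|apply HB; lra].
  unfold fG. apply Rmult_le_compat_r. { left; apply exp_pos. }
  apply Rle_Rpower; lra.
Qed.

Lemma Rpower_small : forall x e eta d, 0 < x -> 0 < d -> 0 < e < eta ->
  eta <= Rpower d (/ x) -> Rpower e x < d.
Proof.
  intros x e eta d Hx Hd He Heta.
  apply Rlt_le_trans with (Rpower eta x). { apply Rlt_Rpower_l; lra. }
  apply Rle_trans with (Rpower (Rpower d (/ x)) x).
  { apply Rle_Rpower_l; [lra|]. split; lra. }
  rewrite Rpower_mult, Rinv_l, Rpower_1 by lra. lra.
Qed.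

Lemma RInt_Rpow_val : forall x a b, 0 < a -> 0 < b -> x <> 0 ->
  RInt (fun t => Rpower t (x - 1)) a b = (Rpower b x - Rpower a x) / x.
Proof. intros. apply is_RInt_unique. apply is_RInt_Rpow; auto. Qed.

Lemma RInt_invsq_val : forall K a b, 0 <= a -> 0 <= b ->
  RInt (fun t => K / (1 + t) ^ 2) a b = K * (/ (1 + a) - / (1 + b)).
Proof.
  intros. apply is_RInt_unique.
  replace (K * (/ (1 + a) - / (1 + b))) with (scal K (/ (1 + a) - / (1 + b))) by reflexivity.
  apply (is_RInt_ext (fun t => scal K (/ (1 + t) ^ 2))).
  { intros; unfold scal; simpl; unfold mult; simpl. unfold Rdiv. ring. }
  apply (is_RInt_scal (V := R_NormedModule)). apply is_RInt_inv_sq; auto.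
Qed.

Lemma ex_RInt_invsq : forall K a b, 0 <= a -> 0 <= b ->
  ex_RInt (fun t => K / (1 + t) ^ 2) a b.
Proof.
  intros. eexists. apply (is_RInt_ext (fun t => scal K (/ (1 + t) ^ 2))).
  { intros; unfold scal; simpl; unfold mult; simpl. unfold Rdiv. ring. }
  apply (is_RInt_scal (V := R_NormedModule)). apply is_RInt_inv_sq; auto.
Qed.

Lemma ex_RInt_Rpow : forall x a b, 0 < a -> 0 < b -> ex_RInt (fun t => Rpower t (x - 1)) a b.
Proof.
  intros. apply (ex_RInt_continuous (V := R_CompleteNormedModule)). intros z Hz.
  assert (0 < z) by (apply Rlt_le_trans with (Rmin a b); [apply Rmin_pos|]; tauto).
  apply continuous_Rpower; auto.
Qed.

Definition IG x (ab : R * R) := RInt (fG x) (fst ab) (snd ab).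

Lemma Gamma_cauchy : forall x, 0 < x -> exists y,
  filterlim (IG x) (filter_prod (at_right 0) (Rbar_locally p_infty)) (locally y).
Proof.
  intros x Hx.
  apply (filterlim_locally_cauchy (U := R_CompleteNormedModule)).
  intro eps. destruct (fG_tail x Hx) as [K [HK [_ HT]]].
  assert (Heps := cond_pos eps).
  set (eta := Rmin 1 (Rpower (x * eps / 2) (/ x))).
  assert (Heta : 0 < eta) by (apply Rmin_pos; [lra| apply Rpower_pos]).
  set (M0 := Rmax 1 (2 * K / eps)).
  exists (fun ab => 0 < fst ab < eta /\ M0 < snd ab). split.
  - apply Filter_prod with (Q := fun e => 0 < e < eta) (R := fun M => M0 < M).
    + exists (mkposreal eta Heta). intros y Hy Hy0. split; auto.
      unfold ball in Hy; simpl in Hy; unfold AbsRing_ball, abs, minus, plus, opp in Hy; simpl in Hy.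
      rewrite Ropp_0, Rplus_0_r, Rabs_pos_eq in Hy by lra. exact Hy.
    + exists M0. auto.
    + intros; simpl; auto.
  - intros [e1 M1] [e2 M2] [[He1 He1'] HM1] [[He2 He2'] HM2]; simpl in *.
    unfold ball; simpl; unfold AbsRing_ball, abs, minus, plus, opp; simpl.
    unfold IG; simpl.
    assert (HM0 : 1 <= M0) by apply Rmax_l.
    assert (HM0' : 2 * K / eps <= M0) by apply Rmax_r.
    assert (Ex : forall a b, 0 < a -> 0 < b -> ex_RInt (fG x) a b) by (intros; apply ex_RInt_fG; auto).
    rewrite <- (Chasles_R (fG x) e2 e1 M2) by (apply Ex; lra).
    rewrite <- (Chasles_R (fG x) e1 M1 M2) by (apply Ex; lra).
    replace (RInt (fG x) e2 e1 + (RInt (fG x) e1 M1 + RInt (fG x) M1 M2) + - RInt (fG x) e1 M1)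
      with (RInt (fG x) e2 e1 + RInt (fG x) M1 M2) by ring.
    eapply Rle_lt_trans. apply Rabs_triang.
    replace (pos eps) with (eps / 2 + eps / 2) by field.
    apply Rplus_lt_compat.
    + eapply Rle_lt_trans.
      apply (absRInt_le (fG x) (fun t => Rpower t (x - 1))).
      { intros t Ht. apply fG_bounds0. apply Rlt_trans with (Rmin e2 e1); [apply Rmin_pos; lra|tauto]. }
      apply Ex; lra. apply ex_RInt_Rpow; lra.
      rewrite RInt_Rpow_val by lra.
      assert (H1 : Rpower e1 x < x * eps / 2).
      { apply Rpower_small with eta; try lra. nra. apply Rmin_r. }
      assert (H2 : Rpower e2 x < x * eps / 2).
      { apply Rpower_small with eta; try lra. nra. apply Rmin_r. }
      assert (H3 := abs_diff_lt (Rpower e1 x) (Rpower e2 x) (x * eps / 2)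
                 (conj (Rpower_pos _ _) H1) (conj (Rpower_pos _ _) H2)).
      unfold Rdiv. rewrite Rabs_mult, Rabs_inv, (Rabs_pos_eq x) by lra.
      apply Rmult_lt_reg_r with x; [lra|]. rewrite Rmult_assoc, Rinv_l by lra. lra.
    + eapply Rle_lt_trans.
      apply (absRInt_le (fG x) (fun t => K / (1 + t) ^ 2)).
      { intros t Ht. apply HT. apply Rle_trans with (Rmin M1 M2); [apply Rmin_glb; lra|lra]. }
      apply Ex; lra. apply ex_RInt_invsq; lra.
      rewrite RInt_invsq_val by lra.
      assert (Hb : 0 < / (1 + M0)) by (apply Rinv_0_lt_compat; lra).
      assert (H1 : 0 < / (1 + M1) < / (1 + M0)).
      { split. apply Rinv_0_lt_compat; lra. apply Rinv_lt_contravar; nra. }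
      assert (H2 : 0 < / (1 + M2) < / (1 + M0)).
      { split. apply Rinv_0_lt_compat; lra. apply Rinv_lt_contravar; nra. }
      assert (H3 := abs_diff_lt _ _ _ H1 H2).
      rewrite Rabs_mult, (Rabs_pos_eq K) by lra.
      apply Rle_lt_trans with (K * / (1 + M0)). { apply Rmult_le_compat_l; lra. }
      apply Rmult_lt_reg_r with (1 + M0); [lra|]. rewrite Rmult_assoc, Rinv_l by lra.
      assert (2 * K <= M0 * eps).
      { apply Rmult_le_compat_r with (r := eps) in HM0'; [|lra].
        unfold Rdiv in HM0'. rewrite Rmult_assoc, Rinv_l in HM0' by lra. lra. }
      nra.
Qed.

Definition GammaI (x : R) : R :=
  RInt_gen (fun t => Rpower t (x - 1) * exp (- t))
           (at_right 0) (Rbar_locally p_infty).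

Lemma Gamma_approx : forall x, 0 < x -> forall d, 0 < d -> exists eta M0, 0 < eta /\
  forall e M, 0 < e < eta -> M0 < M -> Rabs (RInt (fG x) e M - GammaI x) < d.
Proof.
  intros x Hx d Hd. destruct (Gamma_cauchy x Hx) as [y Hy].
  assert (Hg : GammaI x = y).
  { unfold GammaI. change (fun t => Rpower t (x - 1) * exp (- t)) with (fG x).
    apply (is_RInt_gen_unique (V := R_CompleteNormedModule)).
    unfold is_RInt_gen. apply filterlimi_lim_ext_loc with (f := IG x); auto.
    apply Filter_prod with (Q := fun e => 0 < e) (R := fun M => 0 < M).
    - exists (mkposreal 1 Rlt_0_1). intros; auto.
    - exists 0. auto.
    - intros a b Ha Hb. simpl. unfold IG; simpl. apply (RInt_correct (V := R_CompleteNormedModule)).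
      apply ex_RInt_fG; auto. }
  rewrite Hg.
  apply filterlim_locally with (eps := mkposreal d Hd) in Hy.
  destruct Hy as [Q R [eta HQ] [M0 HR] HP].
  exists eta, M0. split. apply cond_pos.
  intros e M He HM. specialize (HP e M).
  assert (HQe : Q e).
  { apply HQ; [|tauto]. unfold ball; simpl; unfold AbsRing_ball, abs, minus, plus, opp; simpl.
    rewrite Ropp_0, Rplus_0_r, Rabs_pos_eq by lra. tauto. }
  specialize (HP HQe (HR M HM)).
  unfold ball in HP; simpl in HP; unfold AbsRing_ball, abs, minus, plus, opp in HP; simpl in HP.
  unfold IG in HP; simpl in HP. exact HP.
Qed.

Lemma RInt_ext_R (f g : R -> R) a b :
  (forall x, Rmin a b < x < Rmax a b -> f x = g x) -> RInt f a b = RInt g a b.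
Proof. apply (RInt_ext (V := R_CompleteNormedModule)). Qed.


Lemma poch_shift : forall x m, pochhammer x (S m) = x * pochhammer (x + 1) m.
Proof.
  intros x m. induction m.
  - simpl. ring.
  - change (pochhammer x (S (S m))) with (pochhammer x (S m) * (x + INR (S m))).
    rewrite IHm. simpl pochhammer at 2. rewrite S_INR. ring.
Qed.

Lemma poch_pos : forall x m, 0 < x -> 0 < pochhammer x m.
Proof.
  intros x m Hx. induction m; simpl. lra.
  apply Rmult_lt_0_compat; auto. assert (0 <= INR m) by apply pos_INR. lra.
Qed.

Definition Kf n x m t := Rpower t (x - 1) * (1 - t / n) ^ m.
Definition KI n x m e := RInt (Kf n x m) e n.
Definition gK n x m := Rpower n x * INR (fact m) / pochhammer x (S m).

Lemma ex_RInt_Kf : forall n x m a b, 0 < a -> 0 < b -> ex_RInt (Kf n x m) a b.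
Proof.
  intros. unfold Kf. apply ex_RInt_Rpower_mul; auto. intros. auto_derive. auto.
Qed.

Lemma RInt_lin : forall (f g : R -> R) a b c, ex_RInt f a b -> ex_RInt g a b ->
  RInt (fun t => f t + c * g t) a b = RInt f a b + c * RInt g a b.
Proof.
  intros f g a b c Hf Hg.
  assert (H1 : RInt (fun t => c * g t) a b = c * RInt g a b)
    by (apply (RInt_scal (V := R_CompleteNormedModule) g a b c Hg)).
  assert (H2 : ex_RInt (fun t => c * g t) a b)
    by (apply (ex_RInt_scal (V := R_CompleteNormedModule) g a b c Hg)).
  rewrite <- H1. apply (RInt_plus (V := R_CompleteNormedModule) f (fun t => c * g t)); auto.
Qed.

Lemma KI_step : forall n x m e, 0 < n -> 0 < x -> 0 < e ->
  KI n x (S m) e = - (Rpower e x / x * (1 - e / n) ^ (S m))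
                   + INR (S m) / (n * x) * KI n (x + 1) m e.
Proof.
  intros n x m e Hn Hx He. unfold KI.
  set (H := fun t => / x * Rpower t x * (1 - t / n) ^ (S m)).
  set (dH := fun t => Kf n x (S m) t - INR (S m) / (n * x) * Kf n (x + 1) m t).
  assert (HD : forall t, 0 < t -> is_derive H t (dH t)).
  { intros t Ht. unfold H, dH, Kf.
    apply (is_derive_ext_R (fun t => (/ x * Rpower t x) * (1 - t / n) ^ S m)). { intros; ring. }
    eapply is_derive_val.
    apply (is_derive_mult (K := R_AbsRing) (fun t => / x * Rpower t x) (fun t => (1 - t / n) ^ S m)).
    - apply is_derive_scal. apply is_derive_Rpower. auto.
    - auto_derive_fun ((fun t => (1 - t / n) ^ S m)). intros HH. apply HH. auto.
    - intros; apply Rmult_comm.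
    - unfold plus, mult; simpl. replace (x + 1 - 1) with x by ring. change (1 + - (t * / n)) with (1 - t / n). field. lra. }
  assert (HI : is_RInt dH e n (H n - H e)).
  { apply (is_RInt_derive (V := R_CompleteNormedModule) H dH).
    - intros t Ht. apply HD. apply Rlt_le_trans with (Rmin e n); [apply Rmin_pos|]; tauto.
    - intros t Ht. assert (0 < t) by (apply Rlt_le_trans with (Rmin e n); [apply Rmin_pos|]; tauto).
      apply (ex_derive_continuous (K := R_AbsRing) (V := R_NormedModule)).
      unfold dH, Kf. apply (ex_derive_minus (K := R_AbsRing) (V := R_NormedModule)).
      * apply ex_derive_Rpower_mul; auto. auto_derive; auto.
      * apply (ex_derive_scal (fun t => Rpower t (x + 1 - 1) * (1 - t / n) ^ m)).
        apply ex_derive_Rpower_mul; auto. auto_derive; auto. }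
  apply (is_RInt_unique (V := R_CompleteNormedModule)) in HI.
  assert (Hn0 : H n = 0).
  { unfold H. replace (1 - n / n) with 0 by (field; lra). simpl. ring. }
  assert (HE : RInt (Kf n x (S m)) e n = RInt (fun t => dH t + INR (S m) / (n * x) * Kf n (x + 1) m t) e n).
  { apply RInt_ext_R. intros; unfold dH; ring. }
  rewrite HE, RInt_lin.
  - assert (HI2 : RInt dH e n = H n - H e) by exact HI. rewrite HI2, Hn0. unfold H. match goal with |- ?a = ?b => change (@eq R a b) end. field. lra.
  - exists (H n - H e). apply (is_RInt_derive (V := R_CompleteNormedModule) H dH).
    + intros t Ht. apply HD. apply Rlt_le_trans with (Rmin e n); [apply Rmin_pos|]; tauto.
    + intros t Ht. assert (0 < t) by (apply Rlt_le_trans with (Rmin e n); [apply Rmin_pos|]; tauto).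
      apply (ex_derive_continuous (K := R_AbsRing) (V := R_NormedModule)).
      unfold dH, Kf. apply (ex_derive_minus (K := R_AbsRing) (V := R_NormedModule)).
      * apply ex_derive_Rpower_mul; auto. auto_derive; auto.
      * apply (ex_derive_scal (fun t => Rpower t (x + 1 - 1) * (1 - t / n) ^ m)).
        apply ex_derive_Rpower_mul; auto. auto_derive; auto.
  - apply ex_RInt_Kf; auto.
Qed.

Lemma KI_base : forall n x e, 0 < n -> 0 < x -> 0 < e ->
  KI n x 0 e = gK n x 0 - / x * Rpower e x.
Proof.
  intros n x e Hn Hx He. unfold KI, gK, Kf.
  rewrite (RInt_ext_R _ (fun t => Rpower t (x - 1))) by (intros; simpl; ring).
  rewrite RInt_Rpow_val by lra. simpl. field. lra.
Qed.

Lemma gK_step : forall n x m, 0 < n -> 0 < x ->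
  gK n x (S m) = INR (S m) / (n * x) * gK n (x + 1) m.
Proof.
  intros n x m Hn Hx. unfold gK.
  rewrite (poch_shift x (S m)).
  rewrite Rpower_plus, Rpower_1 by lra.
  change (fact (S m)) with (S m * fact m)%nat. rewrite mult_INR.
  assert (0 < pochhammer (x + 1) (S m)) by (apply poch_pos; lra).
  field. lra.
Qed.

Lemma gK_pos : forall n x m, 0 < n -> 0 < x -> 0 < gK n x m.
Proof.
  intros. unfold gK. apply Rdiv_lt_0_compat.
  apply Rmult_lt_0_compat. apply Rpower_pos. apply lt_0_INR, lt_O_fact.
  apply poch_pos; auto.
Qed.

Lemma KI_bounds : forall n, 0 < n -> forall m x, 0 < x -> exists C, 0 <= C /\
  forall e, 0 < e <= n -> gK n x m - C * Rpower e x <= KI n x m e <= gK n x m.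
Proof.
  intros n Hn m. induction m; intros x Hx.
  - exists (/ x). split. left; apply Rinv_0_lt_compat; auto.
    intros e He. rewrite KI_base by lra.
    assert (0 < / x * Rpower e x) by (apply Rmult_lt_0_compat; [apply Rinv_0_lt_compat; auto| apply Rpower_pos]).
    lra.
  - destruct (IHm (x + 1) ltac:(lra)) as [C [HC HB]].
    set (c := INR (S m) / (n * x)).
    assert (Hc : 0 < c).
    { unfold c. apply Rdiv_lt_0_compat. apply lt_0_INR; lia. nra. }
    exists (/ x + c * C * n). split.
    { assert (0 < / x) by (apply Rinv_0_lt_compat; auto).
      assert (0 <= c * C) by nra. nra. }
    intros e He. rewrite KI_step by lra. rewrite gK_step by lra. fold c.
    specialize (HB e He).
    assert (Hp : 0 <= 1 - e / n <= 1).
    { split. apply Rmult_le_reg_r with n; auto. unfold Rdiv.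
      rewrite Rmult_minus_distr_r, Rmult_assoc, Rinv_l by lra. lra.
      assert (0 < e / n) by (apply Rdiv_lt_0_compat; lra). lra. }
    assert (Hq : 0 <= (1 - e / n) ^ S m <= 1).
    { split. apply pow_le; lra. apply Rle_trans with (1 ^ S m); [apply pow_incr; lra | rewrite pow1; lra]. }
    assert (Hpe := Rpower_pos e x).
    assert (Hex : Rpower e (x + 1) <= Rpower e x * n).
    { rewrite Rpower_plus, Rpower_1 by lra. apply Rmult_le_compat_l; lra. }
    assert (Hix : 0 < / x) by (apply Rinv_0_lt_compat; auto).
    assert (H0 : 0 <= Rpower e x / x * (1 - e / n) ^ S m <= Rpower e x * / x).
    { unfold Rdiv. split. apply Rmult_le_pos; [apply Rmult_le_pos|]; lra.
      rewrite <- (Rmult_1_r (Rpower e x * / x)) at 2. apply Rmult_le_compat_l; [|lra].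
      apply Rmult_le_pos; lra. }
    split.
    + assert (c * (gK n (x + 1) m - C * Rpower e (x + 1)) <= c * KI n (x + 1) m e)
        by (apply Rmult_le_compat_l; lra).
      assert (c * C * Rpower e (x + 1) <= c * C * (Rpower e x * n)).
      { apply Rmult_le_compat_l; [|lra]. nra. }
      nra.
    + assert (c * KI n (x + 1) m e <= c * gK n (x + 1) m) by (apply Rmult_le_compat_l; lra).
      lra.
Qed.

Lemma Bern : forall n v, 0 <= v <= 1 -> 1 - INR n * v <= (1 - v) ^ n.
Proof.
  intros n v Hv. induction n.
  - simpl. lra.
  - rewrite S_INR. simpl.
    assert (0 <= (1 - v) ^ n) by (apply pow_le; lra).
    assert (0 <= INR n) by apply pos_INR.
    nra.
Qed.

Lemma exp_ineq_a : forall N t, (1 <= N)%nat -> 0 <= t <= INR N ->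
  (1 - t / INR N) ^ N <= exp (- t).
Proof.
  intros N t HN Ht. assert (HN' : 1 <= INR N) by (apply (le_INR 1); lia).
  replace (exp (- t)) with (exp (- t / INR N) ^ N).
  2: { rewrite <- exp_nat_mul. f_equal. field. lra. }
  apply pow_incr. split.
  - assert (t / INR N <= 1). { apply Rmult_le_reg_r with (INR N); [lra|].
      unfold Rdiv. rewrite Rmult_assoc, Rinv_l by lra. lra. } lra.
  - replace (1 - t / INR N) with (1 + (- t / INR N)) by (unfold Rdiv; ring).
    apply exp_ineq1_le.
Qed.

Lemma exp_ineq_b : forall N t, (1 <= N)%nat -> 0 <= t <= INR N ->
  exp (- t) <= (1 - t / INR N) ^ N + t ^ 2 * exp (- t) / INR N.
Proof.
  intros N t HN Ht. assert (HN' : 1 <= INR N) by (apply (le_INR 1); lia).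
  assert (Hu : 0 <= t / INR N <= 1).
  { split. apply Rdiv_le_0_compat; lra. apply Rmult_le_reg_r with (INR N); [lra|].
      unfold Rdiv. rewrite Rmult_assoc, Rinv_l by lra. lra. }
  assert (H1 : (1 + t / INR N) ^ N <= exp t).
  { replace (exp t) with (exp (t / INR N) ^ N).
    2: { rewrite <- exp_nat_mul. f_equal. field. lra. }
    apply pow_incr. split. lra. apply exp_ineq1_le. }
  assert (H2 : 1 - t ^ 2 / INR N <= (1 + t / INR N) ^ N * (1 - t / INR N) ^ N).
  { rewrite <- Rpow_mult_distr.
    replace ((1 + t / INR N) * (1 - t / INR N)) with (1 - (t / INR N) ^ 2) by ring.
    eapply Rle_trans; [|apply Bern].
    - right. field. lra.
    - split. apply pow_le. lra. apply Rle_trans with (1 ^ 2); [apply pow_incr; lra| simpl; lra]. }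
  assert (H3 : 0 <= (1 - t / INR N) ^ N) by (apply pow_le; lra).
  assert (H4 : 1 - t ^ 2 / INR N <= exp t * (1 - t / INR N) ^ N).
  { eapply Rle_trans; [apply H2|]. apply Rmult_le_compat_r; auto. }
  assert (He := exp_pos (- t)).
  apply Rmult_le_compat_l with (r := exp (- t)) in H4; [|lra].
  rewrite <- Rmult_assoc, <- exp_plus in H4. replace (- t + t) with 0 in H4 by ring.
  rewrite exp_0 in H4. unfold Rdiv in *. nra.
Qed.

Lemma Kf_le_fG : forall N x t, (1 <= N)%nat -> 0 < t <= INR N ->
  Kf (INR N) x N t <= fG x t.
Proof.
  intros. unfold Kf, fG. apply Rmult_le_compat_l. left; apply Rpower_pos.
  apply exp_ineq_a; auto; lra.
Qed.

Lemma fG_le_Kf : forall N x t, (1 <= N)%nat -> 0 < t <= INR N ->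
  fG x t <= Kf (INR N) x N t + / INR N * (Rpower t (x + 1) * exp (- t)).
Proof.
  intros N x t HN Ht. unfold Kf, fG.
  replace (Rpower t (x + 1)) with (Rpower t (x - 1) * t ^ 2).
  2: { replace (x + 1) with ((x - 1) + INR 2) by (simpl; ring).
       rewrite Rpower_plus, Rpower_pow by lra. ring. }
  assert (H := exp_ineq_b N t HN ltac:(lra)). assert (Hp := Rpower_pos t (x - 1)).
  apply Rmult_le_compat_l with (r := Rpower t (x - 1)) in H; [|lra].
  eapply Rle_trans; [apply H|]. right. unfold Rdiv. ring.
Qed.

Lemma ex_RInt_g2 : forall x a b, 0 < a -> 0 < b ->
  ex_RInt (fun t => Rpower t (x + 1) * exp (- t)) a b.
Proof. intros. apply ex_RInt_Rpower_mul; auto. intros; auto_derive; auto. Qed.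

Lemma RInt_fG_nonneg : forall x a b, 0 < a <= b -> 0 <= RInt (fG x) a b.
Proof.
  intros. apply RInt_ge_0. lra. apply ex_RInt_fG; lra.
  intros. apply fG_bounds0. lra.
Qed.

Lemma Gamma_bounds : forall x, 0 < x -> exists K, 0 < K /\ forall N, (1 <= N)%nat ->
  gK (INR N) x N <= GammaI x <= gK (INR N) x N + 2 * K / INR N.
Proof.
  intros x Hx. destruct (fG_tail x Hx) as [K [HK [HK1 HK2]]].
  exists K. split; auto. intros N HN.
  assert (HN' : 1 <= INR N) by (apply (le_INR 1); lia).
  destruct (KI_bounds (INR N) ltac:(lra) N x Hx) as [C [HC HB]].
  split.
  - apply le_epsilon. intros d Hd.
    destruct (Gamma_approx x Hx (d / 2) ltac:(lra)) as [eta [M0 [Heta HA]]].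
    set (e := Rmin (Rmin (eta / 2) (INR N)) (Rpower (d / 2 / (C + 1)) (/ x) / 2)).
    assert (Hr := Rpower_pos (d / 2 / (C + 1)) (/ x)).
    assert (He0 : 0 < e) by (unfold e; repeat apply Rmin_pos; lra).
    assert (He1 : e <= eta / 2) by (unfold e; eapply Rle_trans; [apply Rmin_l|apply Rmin_l]).
    assert (He2 : e <= INR N) by (unfold e; eapply Rle_trans; [apply Rmin_l|apply Rmin_r]).
    assert (He3 : e <= Rpower (d / 2 / (C + 1)) (/ x) / 2) by (unfold e; apply Rmin_r).
    set (M := Rmax (M0 + 1) (INR N)).
    assert (HM1 : M0 < M) by (unfold M; eapply Rlt_le_trans; [|apply Rmax_l]; lra).
    assert (HM2 : INR N <= M) by (unfold M; apply Rmax_r).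
    specialize (HA e M ltac:(lra) HM1).
    assert (Hex : Rpower e x < d / 2 / (C + 1)).
    { apply Rpower_small with (Rpower (d / 2 / (C + 1)) (/ x)); auto.
      apply Rdiv_lt_0_compat; lra. lra. lra. }
    assert (HCe : C * Rpower e x <= d / 2).
    { assert (Hpe := Rpower_pos e x).
      apply Rle_trans with ((C + 1) * Rpower e x). nra.
      apply Rmult_lt_compat_l with (r := C + 1) in Hex; [|lra].
      assert (HCe' : (C + 1) * (d / 2 / (C + 1)) = d / 2) by (field; lra).
      lra. }
    specialize (HB e ltac:(lra)).
    assert (H1 : KI (INR N) x N e <= RInt (fG x) e (INR N)).
    { unfold KI. apply RInt_le. lra. apply ex_RInt_Kf; lra. apply ex_RInt_fG; lra.
      intros t Ht. apply Kf_le_fG; auto. lra. }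
    rewrite <- (Chasles_R (fG x) e (INR N) M) in HA by (apply ex_RInt_fG; lra).
    assert (H2 := RInt_fG_nonneg x (INR N) M ltac:(lra)).
    unfold Rabs in HA; destruct (Rcase_abs _) in HA; lra.
  - apply le_epsilon. intros d Hd.
    destruct (Gamma_approx x Hx d Hd) as [eta [M0 [Heta HA]]].
    set (e := Rmin (eta / 2) (INR N)).
    assert (He0 : 0 < e) by (unfold e; apply Rmin_pos; lra).
    assert (He1 : e <= eta / 2) by (unfold e; apply Rmin_l).
    assert (He2 : e <= INR N) by (unfold e; apply Rmin_r).
    set (M := Rmax (M0 + 1) (INR N)).
    assert (HM1 : M0 < M) by (unfold M; eapply Rlt_le_trans; [|apply Rmax_l]; lra).
    assert (HM2 : INR N <= M) by (unfold M; apply Rmax_r).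
    specialize (HA e M ltac:(lra) HM1).
    specialize (HB e ltac:(lra)).
    assert (H1 : RInt (fG x) e (INR N) <= KI (INR N) x N e
                 + / INR N * RInt (fun t => Rpower t (x + 1) * exp (- t)) e (INR N)).
    { unfold KI. rewrite <- RInt_lin. apply RInt_le. lra. apply ex_RInt_fG; lra.
      apply (ex_RInt_plus (V := R_NormedModule)). apply ex_RInt_Kf; lra.
      apply (ex_RInt_scal (V := R_NormedModule)). apply ex_RInt_g2; lra.
      intros t Ht. apply fG_le_Kf; auto. lra.
      apply ex_RInt_Kf; lra. apply ex_RInt_g2; lra. }
    assert (H2 : RInt (fun t => Rpower t (x + 1) * exp (- t)) e (INR N) <= K).
    { eapply Rle_trans. apply RInt_le with (g := fun t => K / (1 + t) ^ 2). lra.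
      apply ex_RInt_g2; lra. apply ex_RInt_invsq; lra.
      intros t Ht. apply HK1. lra.
      rewrite RInt_invsq_val by lra.
      assert (0 < / (1 + INR N)) by (apply Rinv_0_lt_compat; lra).
      assert (/ (1 + e) <= 1). { rewrite <- Rinv_1. apply Rinv_le_contravar; lra. }
      nra. }
    assert (H3 : RInt (fG x) (INR N) M <= K / INR N).
    { eapply Rle_trans. apply RInt_le with (g := fun t => K / (1 + t) ^ 2). lra.
      apply ex_RInt_fG; lra. apply ex_RInt_invsq; lra.
      intros t Ht. apply HK2. lra.
      rewrite RInt_invsq_val by lra.
      assert (0 < / (1 + M)) by (apply Rinv_0_lt_compat; lra).
      assert (/ (1 + INR N) <= / INR N) by (apply Rinv_le_contravar; lra).
      unfold Rdiv. nra. }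
    rewrite <- (Chasles_R (fG x) e (INR N) M) in HA by (apply ex_RInt_fG; lra).
    assert (H4 : / INR N * RInt (fun t => Rpower t (x + 1) * exp (- t)) e (INR N) <= K / INR N).
    { unfold Rdiv. rewrite Rmult_comm. apply Rmult_le_compat_r; auto.
      left; apply Rinv_0_lt_compat; lra. }
    assert (H5 : 2 * K / INR N = K / INR N + K / INR N) by (field; lra).
    rewrite H5.
    unfold Rabs in HA; destruct (Rcase_abs _) in HA; lra.
Qed.

Lemma Gamma_lim : forall x, 0 < x ->
  is_lim_seq (fun N => gK (INR N) x N) (GammaI x).
Proof.
  intros x Hx. destruct (Gamma_bounds x Hx) as [K [HK HB]].
  apply is_lim_seq_spec. intro eps. assert (He := cond_pos eps).
  destruct (nat_above (2 * K / eps)) as [N1 HN1].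
  exists (S N1). intros n Hn.
  assert (Hn' : INR N1 + 1 <= INR n) by (rewrite <- S_INR; apply le_INR; lia).
  assert (Hpos : 0 <= INR N1) by apply pos_INR.
  destruct (HB n ltac:(lia)) as [H1 H2].
  assert (H3 : 2 * K / INR n < eps).
  { apply Rmult_lt_reg_r with (INR n); [lra|]. unfold Rdiv. rewrite Rmult_assoc, Rinv_l by lra.
    assert (2 * K <= INR N1 * eps).
    { apply Rmult_le_compat_r with (r := eps) in HN1; [|lra].
      unfold Rdiv in HN1. rewrite Rmult_assoc, Rinv_l in HN1 by lra. lra. }
    nra. }
  unfold Rabs; destruct (Rcase_abs _); lra.
Qed.


Definition Ah a b c n := pochhammer a n * pochhammer b n / (pochhammer c n * INR (fact n)).

Lemma is_series_lim : forall (a : nat -> R) l, is_series a l <-> is_lim_seq (sum_n a) l.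
Proof. intros; split; intro H; exact H. Qed.

Lemma sum_n_S : forall (a : nat -> R) n, sum_n a (S n) = sum_n a n + a (S n).
Proof. intros. apply (sum_Sn (G := R_AbelianMonoid)). Qed.

Lemma sum_n_0 : forall (a : nat -> R), sum_n a 0 = a 0%nat.
Proof. intros. apply (sum_O (G := R_AbelianMonoid)). Qed.

Lemma Ah_0 : forall a b c, Ah a b c 0 = 1.
Proof. intros. unfold Ah. simpl. field. Qed.

Lemma Ah_S : forall a b c n, 0 < c ->
  Ah a b c (S n) = Ah a b c n * ((a + INR n) * (b + INR n) / ((c + INR n) * INR (S n))).
Proof.
  intros a b c n Hc. unfold Ah.
  change (pochhammer a (S n)) with (pochhammer a n * (a + INR n)).
  change (pochhammer b (S n)) with (pochhammer b n * (b + INR n)).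
  change (pochhammer c (S n)) with (pochhammer c n * (c + INR n)).
  change (fact (S n)) with (S n * fact n)%nat. rewrite mult_INR.
  assert (0 < pochhammer c n) by (apply poch_pos; auto).
  assert (0 < INR (fact n)) by (apply lt_0_INR, lt_O_fact).
  assert (0 < INR (S n)) by (apply lt_0_INR; lia).
  assert (0 <= INR n) by apply pos_INR.
  field. repeat split; lra.
Qed.

Lemma Ah_pos : forall a b c n, 0 < a -> 0 < b -> 0 < c -> 0 < Ah a b c n.
Proof.
  intros. unfold Ah. apply Rdiv_lt_0_compat.
  apply Rmult_lt_0_compat; apply poch_pos; auto.
  apply Rmult_lt_0_compat. apply poch_pos; auto. apply lt_0_INR, lt_O_fact.
Qed.

Lemma Ah_raabe : forall a b c n, 0 < c ->
  INR n * Ah a b c n - INR (S n) * Ah a b c (S n) =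
  Ah a b c n * ((c - a - b) * INR n - a * b) / (c + INR n).
Proof.
  intros a b c n Hc. rewrite Ah_S by auto.
  assert (0 <= INR n) by apply pos_INR.
  rewrite S_INR. field. lra.
Qed.

Lemma sum_n_mono : forall (A : nat -> R), (forall n, 0 <= A n) ->
  forall m d, sum_n A m <= sum_n A (m + d).
Proof.
  intros A HA m d. induction d.
  - rewrite Nat.add_0_r. lra.
  - rewrite Nat.add_succ_r, sum_n_S. specialize (HA (S (m + d))). lra.
Qed.

Lemma hyp_conv : forall a b c, 0 < a -> 0 < b -> a + b < c ->
  ex_series (Ah a b c) /\ is_lim_seq (fun n => INR n * Ah a b c n) 0.
Proof.
  intros a b c Ha Hb Hc. set (A := Ah a b c). set (s := c - a - b).
  assert (Hs : 0 < s) by (unfold s; lra).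
  assert (HA : forall n, 0 < A n) by (intros; apply Ah_pos; lra).
  destruct (nat_above ((2 * a * b + s * c) / s)) as [N0' HN0'].
  set (N0 := S N0').
  assert (HN0 : (2 * a * b + s * c) / s <= INR N0) by (unfold N0; rewrite S_INR; lra).
  assert (Hr : forall n, (N0 <= n)%nat -> s / 2 * A n <= INR n * A n - INR (S n) * A (S n)).
  { intros n Hn. unfold A. rewrite Ah_raabe by lra. fold A. fold s.
    assert (HnN : INR N0 <= INR n) by (apply le_INR; auto).
    assert (Hn2 : (2 * a * b + s * c) <= s * INR n).
    { apply Rmult_le_compat_l with (r := s) in HN0; [|lra].
      unfold Rdiv in HN0. rewrite <- Rmult_assoc, (Rmult_comm s), Rmult_assoc, Rinv_r, Rmult_1_r in HN0 by lra.
      nra. }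
    assert (Hcn : 0 < c + INR n) by (assert (0 <= INR n) by apply pos_INR; lra).
    apply Rmult_le_reg_r with (c + INR n); auto.
    assert (E : forall X, X / (c + INR n) * (c + INR n) = X) by (intro; field; lra).
    rewrite E. specialize (HA n). nra. }
  assert (HP : forall k, s / 2 * sum_n A (N0 + k) + INR (S (N0 + k)) * A (S (N0 + k))
                        <= s / 2 * sum_n A N0 + INR (S N0) * A (S N0)).
  { induction k.
    - rewrite Nat.add_0_r. lra.
    - rewrite Nat.add_succ_r, sum_n_S.
      specialize (Hr (S (N0 + k)) ltac:(lia)). lra. }
  set (B := sum_n A N0 + 2 / s * (INR (S N0) * A (S N0))).
  assert (HB : forall M, sum_n A M <= B).
  { intro M. destruct (le_lt_dec M N0) as [HM|HM].
    - apply Rle_trans with (sum_n A N0).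
      + replace N0 with (M + (N0 - M))%nat by lia. apply sum_n_mono. intros; left; auto.
      + unfold B. assert (0 < INR (S N0) * A (S N0)) by (apply Rmult_lt_0_compat; [apply lt_0_INR; lia|auto]).
        assert (0 < 2 / s) by (apply Rdiv_lt_0_compat; lra). nra.
    - replace M with (N0 + (M - N0))%nat by lia.
      specialize (HP (M - N0)%nat).
      assert (0 < INR (S (N0 + (M - N0))) * A (S (N0 + (M - N0)))) by
        (apply Rmult_lt_0_compat; [apply lt_0_INR; lia|auto]).
      unfold B. apply Rmult_le_reg_l with (s / 2). lra.
      replace (s / 2 * (sum_n A N0 + 2 / s * (INR (S N0) * A (S N0)))) with
        (s / 2 * sum_n A N0 + INR (S N0) * A (S N0)) by (field; lra).
      lra. }
  destruct (ex_finite_lim_seq_incr (sum_n A) B) as [l Hl].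
  { intros n. rewrite sum_n_S. specialize (HA (S n)). lra. }
  { exact HB. }
  split. { exists l. apply is_series_lim. exact Hl. }
  assert (Hdec : forall n, (N0 <= n)%nat -> A (S n) <= A n).
  { intros n Hn. specialize (Hr n Hn). assert (HAn := HA n). assert (HAS := HA (S n)).
    rewrite S_INR in Hr. assert (0 <= INR n) by apply pos_INR. nra. }
  assert (Hmon : forall N d, (N0 <= N)%nat -> INR d * A (N + d)%nat <= sum_n A (N + d) - sum_n A N).
  { intros N d HN. induction d.
    - simpl. rewrite Nat.add_0_r. lra.
    - rewrite Nat.add_succ_r, sum_n_S, S_INR.
      specialize (Hdec (N + d)%nat ltac:(lia)). assert (0 <= INR d) by apply pos_INR.
      assert (INR d * A (S (N + d)) <= INR d * A (N + d)%nat) by (apply Rmult_le_compat_l; auto).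
      lra. }
  apply is_lim_seq_spec. intro eps. assert (He := cond_pos eps).
  apply is_lim_seq_spec in Hl. destruct (Hl (mkposreal (eps / 4) ltac:(lra))) as [N1 HN1].
  simpl in HN1.
  set (N2 := Nat.max N0 N1).
  exists (S (2 * N2)). intros n Hn.
  assert (HN2a : (N0 <= N2)%nat) by lia. assert (HN2b : (N1 <= N2)%nat) by lia.
  specialize (Hmon N2 (n - N2)%nat HN2a).
  replace (N2 + (n - N2))%nat with n in Hmon by lia.
  assert (H1 := HN1 n ltac:(lia)). assert (H2 := HN1 N2 HN2b).
  assert (Hd : INR n <= 2 * INR (n - N2)).
  { rewrite minus_INR by lia. assert (INR (S (2 * N2)) <= INR n) by (apply le_INR; auto).
    rewrite S_INR, mult_INR in H. simpl in H. lra. }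
  assert (HAn := HA n).
  assert (Hsum : sum_n A n - sum_n A N2 < eps / 2).
  { unfold Rabs in H1, H2. destruct (Rcase_abs (sum_n A n - l)); destruct (Rcase_abs (sum_n A N2 - l)); lra. }
  rewrite Rminus_0_r. rewrite Rabs_pos_eq by (apply Rmult_le_pos; [apply pos_INR| lra]).
  nra.
Qed.


Lemma sum_le_Series : forall (a : nat -> R), (forall n, 0 <= a n) -> ex_series a ->
  forall N, sum_n a N <= Series a.
Proof.
  intros a Ha Hex N.
  assert (H : is_lim_seq (sum_n a) (Series a)) by (apply is_series_lim; apply Series_correct; auto).
  apply (is_lim_seq_incr_n _ N) in H.
  assert (Hl := is_lim_seq_le (fun _ => sum_n a N) (fun n => sum_n a (n + N)) (sum_n a N) (Series a)).
  simpl in Hl. apply Hl; auto.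
  - intros n. rewrite Nat.add_comm. apply sum_n_mono; auto.
  - apply is_lim_seq_const.
Qed.

Lemma Series_ge_first : forall (a : nat -> R), (forall n, 0 <= a n) -> ex_series a ->
  a 0%nat <= Series a.
Proof. intros. rewrite <- sum_n_0. apply sum_le_Series; auto. Qed.

Lemma Ah_shift_c : forall a b c n, 0 < c ->
  Ah a b (c + 1) n = Ah a b c n * (c / (c + INR n)).
Proof.
  intros a b c n Hc. unfold Ah.
  assert (E : pochhammer (c + 1) n = pochhammer c n * (c + INR n) / c).
  { assert (H1 := poch_shift c n). change (pochhammer c (S n)) with (pochhammer c n * (c + INR n)) in H1.
    rewrite H1. field. lra. }
  rewrite E.
  assert (0 < pochhammer c n) by (apply poch_pos; auto).
  assert (0 < INR (fact n)) by (apply lt_0_INR, lt_O_fact).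
  assert (0 <= INR n) by apply pos_INR.
  field. repeat split; lra.
Qed.

Lemma contig_partial : forall a b c N, 0 < c ->
  (c - a - b) * sum_n (Ah a b c) N - (c - a) * (c - b) / c * sum_n (Ah a b (c + 1)) N
  = - (INR (S N) * Ah a b c (S N)).
Proof.
  intros a b c N Hc. induction N.
  - rewrite !sum_n_0. rewrite Ah_shift_c by auto. rewrite Ah_S by auto. rewrite !Ah_0. simpl. field. lra.
  - rewrite !sum_n_S.
    replace ((c - a - b) * (sum_n (Ah a b c) N + Ah a b c (S N)) -
      (c - a) * (c - b) / c * (sum_n (Ah a b (c + 1)) N + Ah a b (c + 1) (S N)))
    with (((c - a - b) * sum_n (Ah a b c) N - (c - a) * (c - b) / c * sum_n (Ah a b (c + 1)) N)
          + ((c - a - b) * Ah a b c (S N) - (c - a) * (c - b) / c * Ah a b (c + 1) (S N))) by ring.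
    rewrite IHN. rewrite Ah_shift_c by auto.
    assert (H := Ah_raabe a b c (S N) Hc).
    assert (0 <= INR (S N)) by apply pos_INR.
    replace (Ah a b c (S N) * (c / (c + INR (S N)))) with
      (Ah a b c (S N) * c / (c + INR (S N))) by (field; lra).
    assert (E : (c - a - b) * Ah a b c (S N) - (c - a) * (c - b) / c * (Ah a b c (S N) * c / (c + INR (S N)))
       = Ah a b c (S N) * ((c - a - b) * INR (S N) - a * b) / (c + INR (S N))) by (field; lra).
    rewrite E, <- H. ring.
Qed.

Definition Sh a b c := Series (Ah a b c).

Lemma contig : forall a b c, 0 < a -> 0 < b -> a + b < c ->
  (c - a - b) * Sh a b c = (c - a) * (c - b) / c * Sh a b (c + 1).
Proof.
  intros a b c Ha Hb Hc.
  destruct (hyp_conv a b c Ha Hb Hc) as [E1 L1].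
  destruct (hyp_conv a b (c + 1) Ha Hb ltac:(lra)) as [E2 _].
  assert (H1 : is_lim_seq (sum_n (Ah a b c)) (Series (Ah a b c))) by (apply is_series_lim; apply Series_correct; auto).
  assert (H2 : is_lim_seq (sum_n (Ah a b (c + 1))) (Series (Ah a b (c + 1)))) by (apply is_series_lim; apply Series_correct; auto).
  assert (H3 := is_lim_seq_minus' _ _ _ _ (is_lim_seq_scal_l _ (c - a - b) _ H1)
                                          (is_lim_seq_scal_l _ ((c - a) * (c - b) / c) _ H2)).
  simpl in H3.
  apply is_lim_seq_incr_1 in L1.
  assert (H4 : is_lim_seq (fun n => (c - a - b) * sum_n (Ah a b c) n -
          (c - a) * (c - b) / c * sum_n (Ah a b (c + 1)) n) 0).
  { apply is_lim_seq_ext with (fun n => (-1) * (INR (S n) * Ah a b c (S n))).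
    { intros; rewrite contig_partial by lra; ring. }
    replace (Finite 0) with (Rbar_mult (-1) 0) by (simpl; f_equal; ring).
    apply is_lim_seq_scal_l. exact L1. }
  apply is_lim_seq_unique in H3. apply is_lim_seq_unique in H4. rewrite H3 in H4.
  injection H4. unfold Sh. lra.
Qed.


Lemma Gamma_eq : forall x, Gamma x = GammaI x.
Proof. reflexivity. Qed.

Lemma Gamma_pos : forall x, 0 < x -> 0 < GammaI x.
Proof.
  intros x Hx. destruct (Gamma_bounds x Hx) as [K [HK HB]].
  destruct (HB 1%nat ltac:(lia)) as [H _].
  assert (0 < gK (INR 1) x 1) by (apply gK_pos; simpl; lra). lra.
Qed.

Definition Rn a b c n :=
  pochhammer (c - a) n * pochhammer (c - b) n / (pochhammer c n * pochhammer (c - a - b) n).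

Lemma Rn_shift : forall a b c n, 0 < a -> 0 < b -> a + b < c ->
  Rn a b c (S n) = (c - a) * (c - b) / (c * (c - a - b)) * Rn a b (c + 1) n.
Proof.
  intros a b c n Ha Hb Hc. unfold Rn.
  rewrite !poch_shift.
  replace (c + 1 - a - b) with (c - a - b + 1) by ring.
  replace (c + 1 - a) with (c - a + 1) by ring.
  replace (c + 1 - b) with (c - b + 1) by ring.
  assert (0 < pochhammer (c + 1) n) by (apply poch_pos; lra).
  assert (0 < pochhammer (c - a - b + 1) n) by (apply poch_pos; lra).
  field. repeat split; lra.
Qed.

Lemma S_ge_Rn : forall a b, 0 < a -> 0 < b -> forall n c, a + b < c -> Rn a b c n <= Sh a b c.
Proof.
  intros a b Ha Hb n. induction n; intros c Hc.
  - unfold Rn, Sh. simpl. replace (1 * 1 / (1 * 1)) with 1 by field.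
    rewrite <- (Ah_0 a b c). apply Series_ge_first.
    intros; left; apply Ah_pos; lra. apply hyp_conv; lra.
  - rewrite Rn_shift by lra.
    assert (H := contig a b c Ha Hb Hc).
    assert (Hk : 0 < (c - a) * (c - b) / (c * (c - a - b))).
    { apply Rdiv_lt_0_compat; apply Rmult_lt_0_compat; lra. }
    assert (E : Sh a b c = (c - a) * (c - b) / (c * (c - a - b)) * Sh a b (c + 1)).
    { apply Rmult_eq_reg_l with (c - a - b). rewrite H. field. lra. lra. }
    rewrite E. apply Rmult_le_compat_l. lra. apply IHn. lra.
Qed.

Lemma Rn_ge_1 : forall a b c n, 0 < a -> 0 < b -> a + b < c -> 1 <= Rn a b c n.
Proof.
  intros a b c n Ha Hb Hc. induction n.
  - unfold Rn; simpl. lra.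
  - assert (E : Rn a b c (S n) = Rn a b c n *
      ((c - a + INR n) * (c - b + INR n) / ((c + INR n) * (c - a - b + INR n)))).
    { unfold Rn. simpl pochhammer.
      assert (0 < pochhammer c n) by (apply poch_pos; lra).
      assert (0 < pochhammer (c - a - b) n) by (apply poch_pos; lra).
      assert (0 <= INR n) by apply pos_INR.
      field. repeat split; lra. }
    rewrite E. assert (0 <= INR n) by apply pos_INR.
    assert (1 <= (c - a + INR n) * (c - b + INR n) / ((c + INR n) * (c - a - b + INR n))).
    { apply Rmult_le_reg_r with ((c + INR n) * (c - a - b + INR n)). nra.
      unfold Rdiv. rewrite Rmult_assoc, Rinv_l by nra. nra. }
    nra.
Qed.

Lemma Rpower_combine : forall N x y u v, x + y = u + v ->
  Rpower N x * Rpower N y = Rpower N u * Rpower N v.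
Proof. intros. rewrite <- !Rpower_plus. rewrite H. auto. Qed.

Lemma Rn_gK : forall a b c N, 0 < a -> 0 < b -> a + b < c ->
  Rn a b c (S N) = gK (INR N) c N * gK (INR N) (c - a - b) N /
                   (gK (INR N) (c - a) N * gK (INR N) (c - b) N).
Proof.
  intros a b c N Ha Hb Hc. unfold Rn, gK.
  assert (E := Rpower_combine (INR N) c (c - a - b) (c - a) (c - b) ltac:(ring)).
  assert (0 < pochhammer c (S N)) by (apply poch_pos; lra).
  assert (0 < pochhammer (c - a) (S N)) by (apply poch_pos; lra).
  assert (0 < pochhammer (c - b) (S N)) by (apply poch_pos; lra).
  assert (0 < pochhammer (c - a - b) (S N)) by (apply poch_pos; lra).
  assert (0 < INR (fact N)) by (apply lt_0_INR, lt_O_fact).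
  assert (Hp1 := Rpower_pos (INR N) (c - a)). assert (Hp2 := Rpower_pos (INR N) (c - b)).
  replace (Rpower (INR N) c * INR (fact N) / pochhammer c (S N) *
     (Rpower (INR N) (c - a - b) * INR (fact N) / pochhammer (c - a - b) (S N)))
    with (Rpower (INR N) c * Rpower (INR N) (c - a - b) * INR (fact N) ^ 2 /
          (pochhammer c (S N) * pochhammer (c - a - b) (S N))) by (field; lra).
  rewrite E. field. repeat split; try lra.
Qed.

Definition PIg a b c := GammaI c * GammaI (c - a - b) / (GammaI (c - a) * GammaI (c - b)).

Lemma Rn_lim : forall a b c, 0 < a -> 0 < b -> a + b < c ->
  is_lim_seq (fun N => Rn a b c (S N)) (PIg a b c).
Proof.
  intros a b c Ha Hb Hc.
  apply is_lim_seq_ext with (fun N => gK (INR N) c N * gK (INR N) (c - a - b) N /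
                   (gK (INR N) (c - a) N * gK (INR N) (c - b) N)).
  { intros; rewrite Rn_gK; auto. }
  unfold PIg. apply is_lim_seq_div'.
  - apply is_lim_seq_mult'; apply Gamma_lim; lra.
  - apply is_lim_seq_mult'; apply Gamma_lim; lra.
  - assert (0 < GammaI (c - a)) by (apply Gamma_pos; lra).
    assert (0 < GammaI (c - b)) by (apply Gamma_pos; lra). nra.
Qed.

Lemma P_le_S : forall a b c, 0 < a -> 0 < b -> a + b < c -> PIg a b c <= Sh a b c.
Proof.
  intros a b c Ha Hb Hc.
  assert (H := is_lim_seq_le (fun N => Rn a b c (S N)) (fun _ => Sh a b c) (PIg a b c) (Sh a b c)).
  simpl in H. apply H.
  - intros; apply S_ge_Rn; auto.
  - apply Rn_lim; auto.
  - apply is_lim_seq_const.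
Qed.

Lemma P_ge_1 : forall a b c, 0 < a -> 0 < b -> a + b < c -> 1 <= PIg a b c.
Proof.
  intros a b c Ha Hb Hc.
  assert (H := is_lim_seq_le (fun _ => 1) (fun N => Rn a b c (S N)) 1 (PIg a b c)).
  simpl in H. apply H.
  - intros; apply Rn_ge_1; auto.
  - apply is_lim_seq_const.
  - apply Rn_lim; auto.
Qed.


Definition beta (sg : R) (m : nat) := pochhammer sg m / INR (fact m).

Lemma beta_0 : forall sg, beta sg 0 = 1.
Proof. intros. unfold beta. simpl. field. Qed.

Lemma beta_S : forall sg m, beta sg (S m) = beta sg m * (sg + INR m) / INR (S m).
Proof.
  intros. unfold beta. change (pochhammer sg (S m)) with (pochhammer sg m * (sg + INR m)).
  change (fact (S m)) with (S m * fact m)%nat. rewrite mult_INR.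
  assert (0 < INR (fact m)) by (apply lt_0_INR, lt_O_fact).
  assert (0 < INR (S m)) by (apply lt_0_INR; lia).
  field. lra.
Qed.

Lemma beta_bounds : forall sg m, 0 < sg <= 1 -> 0 < beta sg m <= 1.
Proof.
  intros sg m Hs. induction m.
  - rewrite beta_0. lra.
  - rewrite beta_S. assert (0 <= INR m) by apply pos_INR. rewrite S_INR.
    assert (0 < (sg + INR m) / (INR m + 1) <= 1).
    { split. apply Rdiv_lt_0_compat; lra.
      apply Rmult_le_reg_r with (INR m + 1); [lra|]. unfold Rdiv.
      rewrite Rmult_assoc, Rinv_l by lra. lra. }
    unfold Rdiv in *. rewrite Rmult_assoc. split. nra.
    apply Rle_trans with (beta sg m * 1). apply Rmult_le_compat_l; lra. lra.
Qed.

Lemma beta_radius : forall sg w, 0 < sg <= 1 -> Rabs w < 1 ->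
  Rbar_lt (Rabs w) (CV_radius (beta sg)).
Proof.
  intros sg w Hs Hw. set (r := (1 + Rabs w) / 2).
  assert (Hr : Rabs w < r < 1) by (unfold r; lra).
  assert (Hr0 : 0 <= Rabs w) by apply Rabs_pos.
  destruct (CV_radius_bounded (beta sg)) as [Hub _].
  assert (H := Hub r). 
  apply Rbar_lt_le_trans with (Finite r). { simpl. lra. }
  apply H. exists 1. intros n.
  rewrite Rabs_mult. destruct (beta_bounds sg n Hs).
  rewrite Rabs_pos_eq by lra. rewrite <- RPow_abs, (Rabs_pos_eq r) by lra.
  apply Rle_trans with (1 * r ^ n). apply Rmult_le_compat_r. apply pow_le; lra. lra.
  rewrite Rmult_1_l. apply Rle_trans with (1 ^ n). apply pow_incr; lra. rewrite pow1; lra.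
Qed.

Lemma beta_ode : forall sg t, 0 < sg <= 1 -> Rabs t < 1 ->
  (1 - t) * PSeries (PS_derive (beta sg)) t = sg * PSeries (beta sg) t.
Proof.
  intros sg t Hs Ht.
  assert (Hr := beta_radius sg t Hs Ht).
  assert (Hd : Rbar_lt (Rabs t) (CV_radius (PS_derive (beta sg)))) by (rewrite CV_radius_derive; auto).
  assert (E1 : (1 - t) * PSeries (PS_derive (beta sg)) t =
     PSeries (PS_derive (beta sg)) t - PSeries (PS_incr_1 (PS_derive (beta sg))) t).
  { rewrite PSeries_incr_1. ring. }
  rewrite E1. rewrite <- PSeries_minus.
  2: { apply CV_radius_inside; auto. }
  2: { apply ex_pseries_incr_1. apply CV_radius_inside; auto. }
  rewrite <- PSeries_scal. apply PSeries_ext. intros n.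
  unfold PS_minus, PS_incr_1, PS_scal, PS_derive. destruct n.
  - unfold plus, opp, zero, scal; simpl. unfold mult; simpl.
    rewrite beta_S, beta_0. simpl. match goal with |- ?a = ?b => change (@eq R a b) end. field.
  - rewrite (beta_S sg (S n)). rewrite !S_INR.
    unfold plus, opp, scal; simpl. unfold mult; simpl.
    match goal with |- ?a = ?b => change (@eq R a b) end. field.
    assert (0 <= INR n) by apply pos_INR. lra.
Qed.

Lemma binom : forall sg w, 0 < sg <= 1 -> 0 <= w < 1 ->
  PSeries (beta sg) w = Rpower (1 - w) (- sg).
Proof.
  intros sg w Hs Hw.
  set (phi := fun t => exp (sg * ln (1 - t)) * PSeries (beta sg) t).
  assert (HD : forall t, 0 <= t <= w -> is_derive phi t 0).
  { intros t Ht.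
    assert (Hta : Rabs t < 1) by (rewrite Rabs_pos_eq; lra).
    assert (Hr := beta_radius sg t Hs Hta).
    unfold phi.
    eapply is_derive_val.
    apply (is_derive_mult (K := R_AbsRing) (fun t => exp (sg * ln (1 - t))) (PSeries (beta sg))).
    - auto_derive_fun (fun t => exp (sg * ln (1 - t))). intros HH. apply HH. lra.
    - apply is_derive_PSeries; auto.
    - intros; apply Rmult_comm.
    - unfold plus, mult; simpl.
      assert (E := beta_ode sg t Hs Hta).
      assert (He := exp_pos (sg * ln (1 - t))).
      replace (PSeries (PS_derive (beta sg)) t) with (sg * PSeries (beta sg) t / (1 - t)).
      2: { rewrite <- E. field. lra. }
      change (1 + - t) with (1 - t).
      match goal with |- ?a = ?b => change (@eq R a b) end. field. lra. }
  destruct (Req_dec w 0) as [Hw0|Hw0].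
  { subst. rewrite PSeries_0, beta_0. replace (1 - 0) with 1 by ring.
    unfold Rpower. rewrite ln_1, Rmult_0_r, exp_0. auto. }
  destruct (MVT_gen phi 0 w (fun _ => 0)) as [c0 [_ Hc0]].
  - intros x Hx. rewrite Rmin_left, Rmax_right in Hx by lra. apply HD. lra.
  - intros x Hx. rewrite Rmin_left, Rmax_right in Hx by lra.
    apply continuity_pt_filterlim. apply (ex_derive_continuous (K := R_AbsRing) (V := R_NormedModule)).
    eexists. apply HD. lra.
  - rewrite Rmult_0_l in Hc0.
    assert (Hp0 : phi 0 = 1).
    { unfold phi. rewrite PSeries_0, beta_0. replace (1 - 0) with 1 by ring.
      rewrite ln_1, Rmult_0_r, exp_0. ring. }
    assert (Hpw : phi w = 1) by lra.
    unfold phi in Hpw.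
    rewrite Rpower_Ropp. unfold Rpower.
    assert (He := exp_pos (sg * ln (1 - w))).
    apply Rmult_eq_reg_l with (exp (sg * ln (1 - w))); [|lra].
    rewrite Hpw. field. lra.
Qed.


Section Main.
Variables a b c : R.
Hypothesis Ha : 0 < a.
Hypothesis Hb : 0 < b.
Hypothesis Hc1 : a + b < c.
Hypothesis Hc2 : c < a + b + 1.

Let sg := a + b + 1 - c.
Let s := c - a - b.

Lemma sg_pos : 0 < sg <= 1.
Proof. unfold sg. lra. Qed.

Definition rp n := pochhammer a (S n) * pochhammer b (S n) / (pochhammer c (S n) * pochhammer sg n).

Lemma rp_pos : forall n, 0 < rp n.
Proof.
  intros. unfold rp. assert (H := sg_pos).
  apply Rdiv_lt_0_compat; apply Rmult_lt_0_compat; apply poch_pos; lra.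
Qed.

Lemma rp_incr : forall n, rp n < rp (S n).
Proof.
  intros n. unfold rp. assert (H := sg_pos).
  change (pochhammer a (S (S n))) with (pochhammer a (S n) * (a + INR (S n))).
  change (pochhammer b (S (S n))) with (pochhammer b (S n) * (b + INR (S n))).
  change (pochhammer c (S (S n))) with (pochhammer c (S n) * (c + INR (S n))).
  change (pochhammer sg (S n)) with (pochhammer sg n * (sg + INR n)).
  assert (Pa := poch_pos a (S n) Ha). assert (Pb := poch_pos b (S n) Hb).
  assert (Pc := poch_pos c (S n) ltac:(lra)). assert (Ps := poch_pos sg n ltac:(lra)).
  assert (Hn := pos_INR n). rewrite S_INR.
  set (X := pochhammer a (S n) * pochhammer b (S n) / (pochhammer c (S n) * pochhammer sg n)).
  assert (HX : 0 < X) by (apply Rdiv_lt_0_compat; apply Rmult_lt_0_compat; lra).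
  replace (pochhammer a (S n) * (a + (INR n + 1)) * (pochhammer b (S n) * (b + (INR n + 1))) /
      (pochhammer c (S n) * (c + (INR n + 1)) * (pochhammer sg n * (sg + INR n))))
    with (X * ((a + (INR n + 1)) * (b + (INR n + 1)) / ((c + (INR n + 1)) * (sg + INR n))))
    by (unfold X; field; repeat split; lra).
  assert (1 < (a + (INR n + 1)) * (b + (INR n + 1)) / ((c + (INR n + 1)) * (sg + INR n))).
  { apply Rmult_lt_reg_r with ((c + (INR n + 1)) * (sg + INR n)). nra.
    unfold Rdiv. rewrite Rmult_assoc, Rinv_l by nra. unfold sg. nra. }
  nra.
Qed.

Lemma rp_mono : forall m d, rp m <= rp (m + d).
Proof.
  intros m d. induction d. rewrite Nat.add_0_r; lra.
  rewrite Nat.add_succ_r. assert (H := rp_incr (m + d)). lra.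
Qed.

Definition sQ := GammaI c * GammaI sg / (GammaI a * GammaI b).

Lemma rp_gK : forall N, rp (S N) =
  gK (INR (S N)) c (S N) * gK (INR (S N)) sg (S N) / (gK (INR (S N)) a (S N) * gK (INR (S N)) b (S N))
  * ((sg + INR (S N)) / INR (S N)).
Proof.
  intros N. unfold rp, gK. assert (H := sg_pos).
  set (M := S N). set (m := INR M).
  assert (Hm : 0 < m) by (unfold m, M; apply lt_0_INR; lia).
  assert (E1 : pochhammer sg M = pochhammer sg (S M) / (sg + m)).
  { change (pochhammer sg (S M)) with (pochhammer sg M * (sg + INR M)). fold m. field. lra. }
  rewrite E1.
  assert (E2 : Rpower m a * Rpower m b * m = Rpower m c * Rpower m sg).
  { rewrite <- !Rpower_plus. replace (c + sg) with ((a + b) + 1) by (unfold sg; ring).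
    rewrite (Rpower_plus (a + b) 1 m), Rpower_1 by lra. reflexivity. }
  assert (Pa := poch_pos a (S M) Ha). assert (Pb := poch_pos b (S M) Hb).
  assert (Pc := poch_pos c (S M) ltac:(lra)). assert (Ps := poch_pos sg (S M) ltac:(lra)).
  assert (Hf : 0 < INR (fact M)) by (apply lt_0_INR, lt_O_fact).
  assert (Ra := Rpower_pos m a). assert (Rb := Rpower_pos m b).
  assert (Rc := Rpower_pos m c). assert (Rs := Rpower_pos m sg).
  assert (Ec : Rpower m c = Rpower m a * Rpower m b * m / Rpower m sg) by (rewrite E2; field; lra).
  rewrite Ec.
  field. repeat split; lra.
Qed.

Lemma inv_S_lim : is_lim_seq (fun N => / INR (S N)) 0.
Proof.
  apply (is_lim_seq_incr_1 (fun N => / INR N)).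
  replace (Finite 0) with (Rbar_inv p_infty) by reflexivity.
  apply is_lim_seq_inv. apply is_lim_seq_INR. discriminate.
Qed.

Lemma rp_lim : is_lim_seq rp sQ.
Proof.
  assert (H := sg_pos).
  apply is_lim_seq_incr_1.
  apply is_lim_seq_ext with (fun N =>
    gK (INR (S N)) c (S N) * gK (INR (S N)) sg (S N) / (gK (INR (S N)) a (S N) * gK (INR (S N)) b (S N))
    * ((sg + INR (S N)) / INR (S N))).
  { intros; rewrite rp_gK; auto. }
  replace sQ with (sQ * 1) by ring.
  apply is_lim_seq_mult'.
  - unfold sQ. apply (is_lim_seq_incr_1 (fun N =>
      gK (INR N) c N * gK (INR N) sg N / (gK (INR N) a N * gK (INR N) b N))).
    apply is_lim_seq_div'.
    + apply is_lim_seq_mult'; apply Gamma_lim; lra.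
    + apply is_lim_seq_mult'; apply Gamma_lim; lra.
    + assert (0 < GammaI a) by (apply Gamma_pos; lra).
      assert (0 < GammaI b) by (apply Gamma_pos; lra). nra.
  - apply is_lim_seq_ext with (fun N => 1 + sg * / INR (S N)).
    { intros N. assert (0 < INR (S N)) by (apply lt_0_INR; lia). field. lra. }
    assert (L : is_lim_seq (fun N => 1 + sg * / INR (S N)) (1 + sg * 0)).
    { apply is_lim_seq_plus'. apply is_lim_seq_const.
      apply (is_lim_seq_scal_l _ sg (Finite 0)). apply inv_S_lim. }
    replace (1 + sg * 0) with 1 in L by ring. exact L.
Qed.

Lemma rp_lt : forall n, rp n < sQ.
Proof.
  intros n. apply Rlt_le_trans with (rp (S n)). apply rp_incr.
  assert (H := is_lim_seq_le (fun _ => rp (S n)) (fun k => rp (k + S n)) (rp (S n)) sQ).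
  simpl in H. apply H.
  - intros k. rewrite Nat.add_comm. apply rp_mono.
  - apply is_lim_seq_const.
  - apply (is_lim_seq_incr_n rp (S n)). apply rp_lim.
Qed.


Lemma A_S_rp : forall k, Ah a b c (S k) = rp k * beta sg k / INR (S k).
Proof.
  intros k. unfold Ah, rp, beta. assert (H := sg_pos).
  change (fact (S k)) with (S k * fact k)%nat. rewrite mult_INR.
  assert (Pc := poch_pos c (S k) ltac:(lra)). assert (Ps := poch_pos sg k ltac:(lra)).
  assert (Hf : 0 < INR (fact k)) by (apply lt_0_INR, lt_O_fact).
  assert (0 < INR (S k)) by (apply lt_0_INR; lia).
  field. repeat split; lra.
Qed.

Definition Qc := sQ / s.

Lemma sQ_pos : 0 < sQ.
Proof.
  unfold sQ. assert (H := sg_pos).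
  assert (0 < GammaI c) by (apply Gamma_pos; lra). assert (0 < GammaI sg) by (apply Gamma_pos; lra).
  assert (0 < GammaI a) by (apply Gamma_pos; lra). assert (0 < GammaI b) by (apply Gamma_pos; lra).
  apply Rdiv_lt_0_compat; apply Rmult_lt_0_compat; auto.
Qed.

Lemma Qc_pos : 0 < Qc.
Proof. unfold Qc. apply Rdiv_lt_0_compat. apply sQ_pos. unfold s; lra. Qed.

Lemma beta_diff : forall k, beta sg k - beta sg (S k) = s * beta sg k / INR (S k).
Proof.
  intros k. rewrite beta_S. assert (0 < INR (S k)) by (apply lt_0_INR; lia).
  rewrite S_INR in *. unfold s, sg. field. lra.
Qed.

Lemma A_S_lt : forall k, Ah a b c (S k) < Qc * (beta sg k - beta sg (S k)).
Proof.
  intros k. rewrite A_S_rp, beta_diff. assert (H := sg_pos).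
  assert (Hb0 := beta_bounds sg k H). assert (0 < INR (S k)) by (apply lt_0_INR; lia).
  assert (Hs : 0 < s) by (unfold s; lra).
  replace (Qc * (s * beta sg k / INR (S k))) with (sQ * beta sg k / INR (S k)) by (unfold Qc; field; lra).
  unfold Rdiv. apply Rmult_lt_compat_r. apply Rinv_0_lt_compat; lra.
  apply Rmult_lt_compat_r. lra. apply rp_lt.
Qed.

Definition T m := Sh a b c - sum_n (Ah a b c) m.

Lemma ex_A : ex_series (Ah a b c).
Proof. apply hyp_conv; lra. Qed.

Lemma A_nonneg : forall n, 0 <= Ah a b c n.
Proof. intros; left; apply Ah_pos; lra. Qed.

Lemma T_nonneg : forall m, 0 <= T m.
Proof.
  intros m. unfold T, Sh. assert (H := sum_le_Series (Ah a b c) A_nonneg ex_A m). lra.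
Qed.

Lemma T_le : forall m, T m <= Qc * beta sg m.
Proof.
  intros m. assert (H := sg_pos). assert (HQ := Qc_pos).
  assert (HK : forall K, sum_n (Ah a b c) (m + K) - sum_n (Ah a b c) m + Qc * beta sg (m + K) <= Qc * beta sg m).
  { induction K.
    - rewrite Nat.add_0_r. lra.
    - rewrite Nat.add_succ_r, sum_n_S. assert (H1 := A_S_lt (m + K)). lra. }
  assert (HB : forall K, sum_n (Ah a b c) (K + m) <= sum_n (Ah a b c) m + Qc * beta sg m).
  { intros K. rewrite Nat.add_comm. specialize (HK K). destruct (beta_bounds sg (m + K) H). nra. }
  assert (L : is_lim_seq (sum_n (Ah a b c)) (Sh a b c)).
  { apply is_series_lim. apply Series_correct. apply ex_A. }
  apply (is_lim_seq_incr_n _ m) in L.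
  assert (Hl := is_lim_seq_le (fun K => sum_n (Ah a b c) (K + m)) (fun _ => sum_n (Ah a b c) m + Qc * beta sg m) (Sh a b c) (sum_n (Ah a b c) m + Qc * beta sg m)).
  simpl in Hl. unfold T. assert (sum_n (Ah a b c) m + Qc * beta sg m >= Sh a b c).
  { apply Rle_ge. apply Hl; auto. apply is_lim_seq_const. }
  lra.
Qed.

Lemma T_lt : forall m, T m < Qc * beta sg m.
Proof.
  intros m. assert (E : T m = Ah a b c (S m) + T (S m)).
  { unfold T. rewrite sum_n_S. ring. }
  rewrite E. assert (H1 := A_S_lt m). assert (H2 := T_le (S m)). lra.
Qed.

Lemma A_le_S : forall n, Ah a b c n <= Sh a b c.
Proof.
  intros n. apply Rle_trans with (sum_n (Ah a b c) n).
  - destruct n. rewrite sum_n_0; lra. rewrite sum_n_S.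
    assert (0 <= sum_n (Ah a b c) n).
    { apply Rle_trans with (sum_n (Ah a b c) 0). rewrite sum_n_0; apply A_nonneg.
      replace n with (0 + n)%nat by lia. apply sum_n_mono. apply A_nonneg. }
    lra.
  - apply sum_le_Series. apply A_nonneg. apply ex_A.
Qed.

Lemma ex_Aw : forall w, 0 < w < 1 -> ex_series (fun n => Ah a b c n * w ^ n).
Proof.
  intros w Hw.
  apply (ex_series_le (K := R_AbsRing) (V := R_CompleteNormedModule) _ (fun n => Sh a b c * w ^ n)).
  - intros n. unfold norm; simpl. unfold abs; simpl.
    rewrite Rabs_mult, Rabs_pos_eq by apply A_nonneg.
    rewrite Rabs_pos_eq by (apply pow_le; lra).
    apply Rmult_le_compat_r. apply pow_le; lra. apply A_le_S.
  - apply (ex_series_scal_l (K := R_AbsRing) (V := R_NormedModule) (Sh a b c) (fun n => w ^ n)).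
    apply ex_series_geom. rewrite Rabs_pos_eq; lra.
Qed.

Lemma main_ineq : forall w, 0 < w < 1 ->
  Sh a b c - hyp2F1 a b c w < Qc * Rpower (1 - w) s.
Proof.
  intros w Hw. assert (Hsg := sg_pos). assert (HQ := Qc_pos).
  set (d := Qc - T 0).
  assert (Hd : 0 < d) by (unfold d; assert (H := T_lt 0); rewrite beta_0 in H; lra).
  assert (HI : forall M, (1 - w) * sum_n (fun m => T m * w ^ m) M
                + sum_n (fun n => Ah a b c n * w ^ n) M + T M * w ^ (S M) = Sh a b c).
  { induction M.
    - rewrite !sum_n_0. unfold T. rewrite sum_n_0. simpl. ring.
    - rewrite !sum_n_S.
      assert (ET : T (S M) = T M - Ah a b c (S M)) by (unfold T; rewrite sum_n_S; ring).
      rewrite ET. rewrite <- IHM. simpl. ring. }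
  assert (HV : forall M, sum_n (fun m => T m * w ^ m) M + d <= Qc * sum_n (fun m => beta sg m * w ^ m) M).
  { induction M.
    - rewrite !sum_n_0. simpl. rewrite beta_0. unfold d. lra.
    - rewrite !sum_n_S. assert (H1 := T_le (S M)).
      assert (H2 : T (S M) * w ^ S M <= Qc * beta sg (S M) * w ^ S M).
      { apply Rmult_le_compat_r; auto. apply pow_le; lra. }
      lra. }
  assert (HBs : forall M, sum_n (fun m => beta sg m * w ^ m) M <= Rpower (1 - w) (- sg)).
  { intros M. rewrite <- binom by lra. unfold PSeries.
    apply sum_le_Series.
    - intros n. apply Rmult_le_pos. destruct (beta_bounds sg n Hsg); lra. apply pow_le; lra.
    - apply ex_pseries_R. apply CV_radius_inside. apply beta_radius; auto. rewrite Rabs_pos_eq; lra. }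
  assert (HM : forall M, Sh a b c - sum_n (fun n => Ah a b c n * w ^ n) M - T M * w ^ (S M)
                <= (1 - w) * (Qc * Rpower (1 - w) (- sg) - d)).
  { intros M. rewrite <- (HI M).
    replace ((1 - w) * sum_n (fun m => T m * w ^ m) M + sum_n (fun n => Ah a b c n * w ^ n) M +
      T M * w ^ S M - sum_n (fun n => Ah a b c n * w ^ n) M - T M * w ^ S M)
      with ((1 - w) * sum_n (fun m => T m * w ^ m) M) by ring.
    apply Rmult_le_compat_l. lra.
    specialize (HV M). specialize (HBs M). nra. }
  assert (L1 : is_lim_seq (sum_n (fun n => Ah a b c n * w ^ n)) (hyp2F1 a b c w)).
  { apply is_series_lim. apply Series_correct. apply ex_Aw; auto. }
  assert (L2 : is_lim_seq (fun M => T M * w ^ (S M)) 0).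
  { apply is_lim_seq_le_le with (fun _ => 0) (fun M => Sh a b c * w ^ (S M)).
    - intros M. split. apply Rmult_le_pos. apply T_nonneg. apply pow_le; lra.
      apply Rmult_le_compat_r. apply pow_le; lra. unfold T.
      assert (0 <= sum_n (Ah a b c) M).
      { apply Rle_trans with (sum_n (Ah a b c) 0). rewrite sum_n_0; apply A_nonneg.
        replace M with (0 + M)%nat by lia. apply sum_n_mono. apply A_nonneg. }
      lra.
    - apply is_lim_seq_const.
    - replace (Finite 0) with (Rbar_mult (Sh a b c) 0) by (simpl; f_equal; ring).
      apply is_lim_seq_scal_l. apply (is_lim_seq_incr_1 (fun n => w ^ n)).
      apply is_lim_seq_geom. rewrite Rabs_pos_eq; lra. }
  assert (L3 := is_lim_seq_minus' _ _ _ _ (is_lim_seq_minus' _ _ _ _ (is_lim_seq_const (Sh a b c)) L1) L2).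
  assert (Hle := is_lim_seq_le _ (fun _ => (1 - w) * (Qc * Rpower (1 - w) (- sg) - d)) _ _ HM L3 (is_lim_seq_const _)).
  simpl in Hle.
  assert (E : (1 - w) * Rpower (1 - w) (- sg) = Rpower (1 - w) s).
  { rewrite <- (Rpower_1 (1 - w)) at 1 by lra. rewrite <- Rpower_plus. f_equal. unfold s, sg. ring. }
  assert (0 < (1 - w) * d) by (apply Rmult_lt_0_compat; lra).
  rewrite <- E. nra.
Qed.

End Main.


Lemma final_alg : forall F P Q t q,
  1 <= F -> 1 <= P -> 0 < Q -> 0 < t < 1 -> F > P - Q * t ->
  (q = Q /\ Q <= P \/ q = P - 1 /\ P < Q) ->
  F ^ 2 > P ^ 2 - 2 * P * Q * t + q ^ 2 * (t * t).
Proof.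
  intros F P Q t q HF HP HQ Ht HFP Hq.
  destruct Hq as [[-> HQP]|[-> HPQ]].
  - assert (HQt : Q * t < Q) by nra.
    assert (H0 : 0 <= P - Q * t) by lra.
    assert (F ^ 2 > (P - Q * t) ^ 2) by nra.
    nra.
  - destruct (Rle_dec 0 (P - Q * t)) as [H0|H0].
    + assert (F ^ 2 > (P - Q * t) ^ 2) by nra.
      assert ((P - 1) ^ 2 * (t * t) <= Q ^ 2 * (t * t)).
      { apply Rmult_le_compat_r. nra. assert (0 <= P - 1) by lra. nra. }
      nra.
    + assert (H1 : P < Q * t) by lra.
      assert (H2 : - 2 * P * Q * t <= - 2 * P * P) by nra.
      assert (H3 : (P - 1) ^ 2 * (t * t) <= (P - 1) ^ 2).
      { assert (0 <= (P - 1) ^ 2) by nra. assert (t * t <= 1) by nra. nra. }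
      assert (F ^ 2 >= 1) by nra.
      nra.
Qed.

Theorem lemma5p3 (a b c w : R) :
  0 < a -> 0 < b -> a + b < c -> c < a + b + 1 ->
  0 < w < 1 ->
  hyp2F1 a b c w ^ 2 >
    Pfun a b c ^ 2
    - 2 * Pfun a b c * Qfun a b c * Rpower (1 - w) (c - a - b)
    + qfun a b c ^ 2 * Rpower (1 - w) (2 * (c - a - b)).
Proof.
  intros Ha Hb Hc1 Hc2 Hw.
  assert (Hm := main_ineq a b c Ha Hb Hc1 Hc2 w Hw).
  assert (EP : Pfun a b c = PIg a b c) by reflexivity.
  assert (HPS := P_le_S a b c Ha Hb Hc1).
  assert (HP1 := P_ge_1 a b c Ha Hb Hc1).
  assert (HQ := Qc_pos a b c Ha Hb Hc1 Hc2).
  assert (EQ : Qfun a b c = Qc a b c).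
  { unfold Qfun, Qc, sQ. change Gamma with GammaI.
    assert (0 < GammaI a) by (apply Gamma_pos; lra).
    assert (0 < GammaI b) by (apply Gamma_pos; lra).
    field. repeat split; lra. }
  assert (HF1 : 1 <= hyp2F1 a b c w).
  { unfold hyp2F1. fold (Ah a b c).
    replace 1 with (Ah a b c 0 * w ^ 0) by (rewrite Ah_0; simpl; ring).
    apply (Series_ge_first (fun n => Ah a b c n * w ^ n)).
    - intros n. apply Rmult_le_pos. apply A_nonneg; lra. apply pow_le; lra.
    - apply ex_Aw; lra. }
  set (t := Rpower (1 - w) (c - a - b)).
  assert (Ht : 0 < t < 1).
  { split. apply Rpower_pos. unfold t.
    replace 1 with (Rpower 1 (c - a - b)) at 2.
    apply Rlt_Rpower_l; lra. unfold Rpower. rewrite ln_1, Rmult_0_r, exp_0. auto. }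
  assert (Et2 : Rpower (1 - w) (2 * (c - a - b)) = t * t).
  { unfold t. rewrite <- Rpower_plus. f_equal. ring. }
  rewrite Et2. rewrite EP, EQ. fold t.
  apply final_alg; auto.
  - unfold t. unfold Sh in *. lra.
  - unfold qfun. rewrite <- EP, <- EQ.
    destruct (Rle_dec (Qfun a b c) (Pfun a b c)); [left|right]; split; auto; lra.
Qed.
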